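(* Suppose $\Pi$ is Klingen-ordinary at $p$ and we are in Case B, with $(t_1, t_2) = (0, r_1 - r_2)$. If one of the pairwise products $\{ \alpha \mathfrak{a}_2, \dots, \delta \mathfrak{b}_2\}$ is equal to $p^{r_1 + 2}$, then $\Pi$ must in fact be Borel-ordinary at $p$, $\Sigma_2$ is ordinary at $p$, and the ``bad'' eigenvalue is either $\beta \mathfrak{b}_2$ or $\gamma \mathfrak{a}_2$ (or possibly both) where $\alpha$ and $\mathfrak{a}_2$ are the unit eigenvalues.
   Context: $\Pi$ is a non-endoscopic, non-CAP cuspidal automorphic representation of $\mathrm{GSp}_4$, discrete series at $\infty$ of weight $(r_1+3, r_2+3)$ with $r_1 \ge r_2 \ge 0$, unramified at $p$. Its Hecke parameters $\alpha,\beta,\gamma,\delta$ at $p$ (of $\Pi_p' = \Pi_p \otimes \|\cdot\|^{-(r_1+r_2)/2}$) all have complex absolute value $p^{(r_1+r_2+3)/2}$, satisfy $\alpha\delta = \beta\gamma = p^{r_1+r_2+3}\chi_\Pi(p)$ (with $\chi_\Pi(p)$ a root of unity), and are ordered so that $v_p(\alpha) \le v_p(\beta) \le v_p(\gamma) \le v_p(\delta)$; then $v_p(\alpha)\ge 0$, $v_p(\alpha\beta)\ge r_2+1$. $\Pi$ is Siegel-ordinary if $v_p(\alpha)=0$, Klingen-ordinary if $v_p(\alpha\beta)=r_2+1$, Borel-ordinary if both. Case B: additionally $\Sigma_2$ is a cuspidal automorphic representation of $\mathrm{GL}_2$ generated by a holomorphic newform of weight $t_2+2$, unramified at $p$, with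 Hecke parameters $\mathfrak{a}_2,\mathfrak{b}_2$ (of $\Sigma_{2,p}' = \Sigma_{2,p}\otimes\|\cdot\|^{-t_2/2}$) of complex absolute value $p^{(t_2+1)/2}$ and $\mathfrak{a}_2\mathfrak{b}_2 = p^{t_2+1}\chi_{\Sigma_2}(p)$; one studies $\Pi\boxtimes\Sigma_2$ on $\mathrm{GSp}_4\times\mathrm{GL}_2$. Here $t_1 \ge 0$ is an integer such that $(r_1,r_2,t_1,t_2)$ satisfy $t_1+t_2\equiv r_1+r_2 \bmod 2$, $|t_1-t_2|\le r_1-r_2 \le t_1+t_2\le r_1+r_2$. The set $\{\alpha\mathfrak{a}_2,\dots,\delta\mathfrak{b}_2\}$ is the set of all eight products of a parameter of $\Pi$ with a parameter of $\Sigma_2$. *)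

(* Defs.v *)
(* Hecke parameters live in algC (the algebraic closure of Q,
   with its fixed complex embedding giving the norm `|_|); the p-adic valuation
   comes from a fixed embedding Qbar -> Qbar_p, encoded as a rational-valued
   valuation on algC normalized by v(p) = 1. *)
From mathcomp Require Import all_boot all_order all_algebra all_field.
Set Implicit Arguments. Unset Strict Implicit. Unset Printing Implicit Defensive.
Import Order.TTheory GRing.Theory Num.Theory.
Local Open Scope ring_scope.

(* v is a (normalized) p-adic valuation on algC (values on nonzero elements;
   the value at 0 is irrelevant and never used). Such valuations are exactly
   those induced by embeddings algC = Qbar -> Qbar_p. *)
Definition p_adic_valuation (p : nat) (v : algC -> rat) : Prop :=
  [/\ forall x y : algC, x != 0 -> y != 0 -> v (x * y) = v x + v y,
      forall x y : algC, x != 0 -> y != 0 -> x + y != 0 ->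
        Num.min (v x) (v y) <= v (x + y)
    & v (p%:R) = 1].

Definition root_of_unity (z : algC) : Prop :=
  exists n : nat, (0 < n)%N /\ z ^+ n = 1.

Definition GSp4_hecke_params (p : nat) (v : algC -> rat) (r1 r2 : nat)
  (alpha beta gamma delta chi : algC) : Prop :=
  [/\ `|alpha| ^+ 2 = p%:R ^+ (r1 + r2 + 3) /\ `|beta| ^+ 2 = p%:R ^+ (r1 + r2 + 3)
      /\ `|gamma| ^+ 2 = p%:R ^+ (r1 + r2 + 3) /\ `|delta| ^+ 2 = p%:R ^+ (r1 + r2 + 3),
      root_of_unity chi,
      alpha * delta = p%:R ^+ (r1 + r2 + 3) * chi /\
      beta * gamma = p%:R ^+ (r1 + r2 + 3) * chi,
      v alpha <= v beta /\ v beta <= v gamma /\ v gamma <= v delta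
    & 0 <= v alpha /\ (r2.+1)%:R <= v (alpha * beta)].

(* Hecke parameters a2, b2 at p of Sigma'_{2,p} (weight t2+2), ordered so that
   v(a2) <= v(b2); they are p-adically integral. *)
Definition GL2_hecke_params (p : nat) (v : algC -> rat) (t2 : nat)
  (a2 b2 chi : algC) : Prop :=
  [/\ `|a2| ^+ 2 = p%:R ^+ (t2 + 1) /\ `|b2| ^+ 2 = p%:R ^+ (t2 + 1),
      root_of_unity chi,
      a2 * b2 = p%:R ^+ (t2 + 1) * chi
    & 0 <= v a2 /\ v a2 <= v b2].

Definition siegel_ordinary (v : algC -> rat) (alpha : algC) : Prop :=
  v alpha = 0.
Definition klingen_ordinary (v : algC -> rat) (r2 : nat) (alpha beta : algC) : Prop :=
  v (alpha * beta) = (r2.+1)%:R.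
Definition borel_ordinary (v : algC -> rat) (r2 : nat) (alpha beta : algC) : Prop :=
  siegel_ordinary v alpha /\ klingen_ordinary v r2 alpha beta.
Definition GL2_ordinary (v : algC -> rat) (a2 : algC) : Prop := v a2 = 0.

Definition admissible_weights (r1 r2 t1 t2 : nat) : Prop :=
  [/\ (r2 <= r1)%N, (t1 + t2 = r1 + r2 %[mod 2])%N,
      (maxn t1 t2 - minn t1 t2 <= r1 - r2)%N,
      (r1 - r2 <= t1 + t2)%N & (t1 + t2 <= r1 + r2)%N].

Definition pair_products (alpha beta gamma delta a2 b2 : algC) : seq algC :=
  [:: alpha * a2; alpha * b2; beta * a2; beta * b2;
      gamma * a2; gamma * b2; delta * a2; delta * b2].

(* Main.v *)
Require Import Defs.
From mathcomp Require Import all_boot all_order all_algebra all_field.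
From mathcomp Require Import lra.
Import Order.TTheory GRing.Theory Num.Theory.
Local Open Scope ring_scope.

Lemma vexpn (p : nat) (v : algC -> rat) (x : algC) (n : nat) :
  p_adic_valuation p v -> x != 0 -> v (x ^+ n) = n%:R * v x.
Proof.
case=> vM _ _ x0; elim: n => [|n IH].
  have := vM 1 1; rewrite mulr1 oner_eq0 => /(_ isT isT) h.
  by rewrite expr0 mul0r; lra.
by rewrite exprS vM ?expf_neq0 // IH -addn1 natrD; lra.
Qed.

Lemma vchi (p : nat) (v : algC -> rat) (z : algC) :
  p_adic_valuation p v -> Defs.root_of_unity z -> z != 0 /\ v z = 0.
Proof.
move=> hv [n [n0 hz]].
have z0 : z != 0.
  apply/eqP=> e; move: hz; rewrite e expr0n; case: n n0 => // n _ /=.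
  by move/eqP; rewrite eq_sym oner_eq0.
split=> //.
have := @vexpn p v z n hv z0; rewrite hz.
case: hv => vM _ _; have := vM 1 1; rewrite mulr1 oner_eq0 => /(_ isT isT) h.
have h1 : v 1 = 0 by lra.
rewrite h1 => /esym /eqP; rewrite mulf_eq0 pnatr_eq0 eqn0Ngt n0 /= => /eqP //.
Qed.

Theorem lemma3p8 (p : nat) (v : algC -> rat) (r1 r2 t1 t2 : nat)
  (alpha beta gamma delta chiPi a2 b2 chiSigma : algC) :
  prime p ->
  p_adic_valuation p v ->
  admissible_weights r1 r2 t1 t2 ->
  GSp4_hecke_params p v r1 r2 alpha beta gamma delta chiPi ->
  GL2_hecke_params p v t2 a2 b2 chiSigma ->
  t1 = 0%N -> t2 = (r1 - r2)%N ->
  klingen_ordinary v r2 alpha beta ->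
  p%:R ^+ (r1 + 2) \in pair_products alpha beta gamma delta a2 b2 ->
  [/\ borel_ordinary v r2 alpha beta,
      GL2_ordinary v a2
    & beta * b2 = p%:R ^+ (r1 + 2) \/ gamma * a2 = p%:R ^+ (r1 + 2)].
Proof.
move=> pp hv [r21 _ _ _ _] [[hA [hB [hC hD]]] chP [hAD hBC] [lAB [lBC lCD]] [A0 _]]
  [[ha hb] chS hab [a0 lab]] t10 t2e hK hin.
have p0 : (p%:R : algC) != 0 by rewrite pnatr_eq0 -lt0n prime_gt0.
have vp : v p%:R = 1 by case: hv.
have nz : forall (x : algC) k, `|x| ^+ 2 = p%:R ^+ k -> x != 0.
  move=> x k hx; apply/eqP=> e; move: hx; rewrite e normr0 expr0n /=.
  by move/eqP; rewrite eq_sym expf_eq0 (negPf p0) andbF.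
have nA := nz _ _ hA; have nB := nz _ _ hB; have nC := nz _ _ hC; have nD := nz _ _ hD.
have na := nz _ _ ha; have nb := nz _ _ hb.
have [nchP vchP] := @vchi p v _ hv chP.
have [nchS vchS] := @vchi p v _ hv chS.
have vM : forall x y, x != 0 -> y != 0 -> v (x * y) = v x + v y by case: hv.
have vPk : forall k, v (p%:R ^+ k) = k%:R by move=> k; rewrite (@vexpn p v _ _ hv p0) vp mulr1.
have vPc : forall k c, c != 0 -> v c = 0 -> v (p%:R ^+ k * c) = k%:R.
  by move=> k c c0 vc; rewrite vM ?expf_neq0 // vPk vc addr0.
have eAD : v alpha + v delta = (r1 + r2 + 3)%:R by rewrite -vM // hAD vPc.
have eBC : v beta + v gamma = (r1 + r2 + 3)%:R by rewrite -vM // hBC vPc.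
have eab : v a2 + v b2 = (t2 + 1)%:R by rewrite -vM // hab vPc.
have eK : v alpha + v beta = (r2.+1)%:R by rewrite -vM.
have key : forall x y, x != 0 -> y != 0 -> p%:R ^+ (r1 + 2) = x * y ->
    v x + v y = (r1 + 2)%:R by move=> x y x0 y0 e; rewrite -vM // -e vPk.
have r21' : (r2%:R : rat) <= r1%:R by rewrite ler_nat.
have r20 : (0 : rat) <= r2%:R by rewrite ler0n.
move: eAD eBC eab eK key; rewrite t2e !natrD natrB // -addn1 !natrD => eAD eBC eab eK key.
move: hin; rewrite /pair_products !inE.
case/orP=> [/eqP e|].
  have := key _ _ nA na e; lra.
case/orP=> [/eqP e|].
  have := key _ _ nA nb e; lra.
case/orP=> [/eqP e|].
  have := key _ _ nB na e; lra.
case/orP=> [/eqP e|].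
  have := key _ _ nB nb e => h.
  split; [split; [rewrite /siegel_ordinary; lra|done]|rewrite /GL2_ordinary; lra|by left].
case/orP=> [/eqP e|].
  have := key _ _ nC na e => h.
  split; [split; [rewrite /siegel_ordinary; lra|done]|rewrite /GL2_ordinary; lra|by right].
case/orP=> [/eqP e|].
  have := key _ _ nC nb e; lra.
case/orP=> [/eqP e|/eqP e].
  have := key _ _ nD na e; lra.
have := key _ _ nD nb e; lra.
Qed.
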